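(* Let $P$ and $Q$ be autarkic tuples. Then $P\subseteq Q$, or $Q\subseteq P$, or $P\cap Q=\emptyset$.
   Context: Steiner Forest: finite undirected graph $G=(V,E)$, non-negative edge costs $(c_e)_{e\in E}$, set $\mathcal{D}$ of demand pairs $\{a,b\}\subseteq V$ (partners). For $U\subseteq V$, $\delta(U)$ is the set of edges with exactly one endpoint in $U$; $U$ separates $S$ if $S\cap U\ne\emptyset$ and $S\setminus U\ne\emptyset$; $\mathrm{sep}(U)$ is the set of demand pairs separated by $U$. The $\varepsilon$-extended moat-growing algorithm (fixed $\varepsilon\ge0$): time $t$ increases continuously from $0$ at unit rate; it maintains tight edges $F$ (initially empty), duals $y_S(t)\ge0$ (initially $0$), and budgets of components (initially $0$). $\mathcal{C}^t$ is the family of vertex sets of connected components of $(V,F)$. A component is demand-active if it contains a vertex not connected in $(V,F)$ to some partner; budget-active if not demand-active but with positive budget; active if either; $\mathcal{A}^t$ is the set of active components. Each $y_S$, $S\in\mathcal{A}^t$, grows at unit rate; budgets of demand-active components grow at rate $\varepsilon$ and of budget-active ones decrease at rate $1$; an edge $e$ with $\sum_{S:e\in\delta(S)}y_S(t)=c_e$ becomes tight and is added to $F$; merging components add budgets. $y_S=y_S(\infty)$. Autarkic pair: $\{A,B\}$ with $A,B\in\mathrm{supp}(y)$ disjoint, both in $\mathcal{A}^t$ for some $t$, $\mathrm{sep}(A)=\mathrm{sep}(B)\ne\emptyset$. Autarkic triple: $\{A_1,A_2,A_3\}$ pairwise disjoint, all in $\mathcal{A}^t$ for some $t$, each $\mathrm{sep}(A_i)\ne\emptyset$,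 $\mathrm{sep}(A_1\cup A_2\cup A_3)=\emptyset$. Autarkic tuples are autarkic pairs and triples. For autarkic tuples $P$ (with sets $A_i$) and $Q$ (with sets $B_j$), $P\subseteq Q$ means every $A_i$ is contained in some $B_j$, and $P\cap Q=\emptyset$ means $A_i\cap B_j=\emptyset$ for all $i,j$. *)

(* Defs.v *)
From HB Require Import structures.
From mathcomp Require Import all_boot all_order all_algebra.
From mathcomp Require Import reals.
Set Implicit Arguments. Unset Strict Implicit. Unset Printing Implicit Defensive.
Import Order.TTheory GRing.Theory Num.Theory.
Local Open Scope ring_scope.

Section MoatGrowing.
(* An instance of Steiner Forest:
   - V : finite vertex set, E : finite edge set, ends e = endpoints of e
     (an undirected (multi)graph; the orientation of the pair is irrelevant),
   - c : non-negative edge costs,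
   - D : demand pairs; an ordered pair (a,b) in D represents the demand pair {a,b},
   - eps : the parameter of the eps-extended moat-growing algorithm. *)
Variables (R : realType) (V E : finType) (ends : E -> V * V) (c : E -> R)
          (D : {set V * V}) (eps : R).

Definition in_delta (U : {set V}) (e : E) : bool :=
  ((ends e).1 \in U) != ((ends e).2 \in U).

Definition separates (U : {set V}) (d : V * V) : bool :=
  ((d.1 \in U) || (d.2 \in U)) && ((d.1 \notin U) || (d.2 \notin U)).

Definition sep (U : {set V}) : {set V * V} := [set d in D | separates U d].

Definition adjF (F : {set E}) : rel V :=
  fun u w => [exists e in F, (ends e == (u, w)) || (ends e == (w, u))].

Definition comp (F : {set E}) (v : V) : {set V} := [set u | connect (adjF F) v u].

Definition comps (F : {set E}) : {set {set V}} := [set comp F v | v : V].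

Definition partners (u v : V) : bool := ((u, v) \in D) || ((v, u) \in D).

Definition demand_active (F : {set E}) (C : {set V}) : bool :=
  [exists v in C, exists u, partners v u && ~~ connect (adjF F) v u].

Definition dact (F : {set E}) : {set {set V}} :=
  [set C in comps F | demand_active F C].

(* A run of the algorithm is described by breakpoints
     0 = tm 0 < tm 1 < ... < tm k
   and, for each phase i <= k, the (constant on [tm i, tm (i+1))) set Fs i of
   tight edges and the set As i of active components.  Phase k lasts forever
   (there are no active components any more). *)

Definition yat (tm : nat -> R) (As : nat -> {set {set V}}) (i : nat) (S : {set V}) : R :=
  \sum_(j < i) (tm j.+1 - tm j) * (S \in As j)%:R.

Definition load (tm : nat -> R) (As : nat -> {set {set V}}) (i : nat) (e : E) : R :=
  \sum_(S : {set V}) yat tm As i S * (in_delta S e)%:R.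

(* budget of the component C at time tm i: the budgets of all earlier
   components S contained in C have been added into C by merging; each
   such S gained eps per unit of time while demand-active and lost 1 per
   unit of time while budget-active. *)
Definition budget (tm : nat -> R) (Fs : nat -> {set E}) (As : nat -> {set {set V}}) (i : nat) (C : {set V}) : R :=
  \sum_(S : {set V} | S \subset C)
    \sum_(j < i) (tm j.+1 - tm j) *
       (eps * (S \in dact (Fs j))%:R - ((S \in As j) && (S \notin dact (Fs j)))%:R).

Definition is_run (k : nat) (tm : nat -> R) (Fs : nat -> {set E})
  (As : nat -> {set {set V}}) : Prop :=
  [/\ tm 0 = 0,
      (forall i, (i <= k)%N -> Fs i = [set e | c e <= load tm As i e]),
      (forall i, (i <= k)%N ->
         As i = dact (Fs i) :|:
                [set C in comps (Fs i) | (C \notin dact (Fs i)) &&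
                                        (0 < budget tm Fs As i C)]),
      (* no event strictly inside a phase *)
      (forall i, (i < k)%N ->
         [/\ tm i < tm i.+1,
             (forall e, e \notin Fs i -> load tm As i.+1 e <= c e) &
             (forall C, C \in As i -> C \notin dact (Fs i) ->
                tm i.+1 - tm i <= budget tm Fs As i C)]) &
      As k = set0].

Definition yfin (k : nat) (tm : nat -> R) (As : nat -> {set {set V}}) (S : {set V}) : R := yat tm As k S.

Definition suppy (k : nat) (tm : nat -> R) (As : nat -> {set {set V}}) : {set {set V}} := [set S | 0 < yfin k tm As S].

Definition active_at (k : nat) (tm : nat -> R) (As : nat -> {set {set V}}) (t : R) : {set {set V}} :=
  [set S | [exists i : 'I_k, (tm i <= t < tm i.+1) && (S \in As i)]].

(* autarkic tuples, represented by the set of their member sets *)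
Definition autarkic_pair (k : nat) (tm : nat -> R) (As : nat -> {set {set V}}) (P : {set {set V}}) : Prop :=
  exists A B : {set V},
    [/\ P = [set A; B], (A \in suppy k tm As) && (B \in suppy k tm As),
        [disjoint A & B],
        (exists t, (A \in active_at k tm As t) && (B \in active_at k tm As t)) &
        (sep A = sep B /\ sep A != set0)].

Definition autarkic_triple (k : nat) (tm : nat -> R) (As : nat -> {set {set V}}) (P : {set {set V}}) : Prop :=
  exists A1 A2 A3 : {set V},
    [/\ P = [set A1; A2; A3],
        [&& [disjoint A1 & A2], [disjoint A1 & A3] & [disjoint A2 & A3]],
        (exists t, [&& A1 \in active_at k tm As t, A2 \in active_at k tm As t
                     & A3 \in active_at k tm As t]),
        [&& sep A1 != set0, sep A2 != set0 & sep A3 != set0] &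
        sep (A1 :|: A2 :|: A3) = set0].

Definition autarkic (k : nat) (tm : nat -> R) (As : nat -> {set {set V}}) (P : {set {set V}}) : Prop :=
  autarkic_pair k tm As P \/ autarkic_triple k tm As P.

End MoatGrowing.

Definition tuple_sub (V : finType) (P Q : {set {set V}}) : Prop :=
  forall A, A \in P -> exists2 B, B \in Q & A \subset B.

Definition tuple_disj (V : finType) (P Q : {set {set V}}) : Prop :=
  forall A B, A \in P -> B \in Q -> [disjoint A & B].

(* Main.v *)
Require Import Defs.
From HB Require Import structures.
From mathcomp Require Import all_boot all_order all_algebra.
From mathcomp Require Import reals.
From mathcomp Require Import lra.
Set Implicit Arguments. Unset Strict Implicit.
Import Order.TTheory GRing.Theory Num.Theory.
Local Open Scope ring_scope.

Ltac bcase := repeat match goal with |- context [in_mem ?x ?S] => case: (in_mem x S) end.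
Ltac bsolve := bcase; move=> *;
  repeat match goal with H : is_true true -> _ |- _ => specialize (H isT) end;
  solve [ discriminate | done ].

Section Lam.
Variable (V E : finType) (ends : E -> V * V).

Lemma adjF_sym (F : {set E}) : symmetric (adjF ends F).
Proof.
move=> u w; apply/idP/idP; case/existsP=> e /andP[eF H]; apply/existsP; exists e;
  by rewrite eF /= orbC.
Qed.

Lemma connect_mono (F F' : {set E}) u w : F \subset F' ->
  connect (adjF ends F) u w -> connect (adjF ends F') u w.
Proof.
move=> sF; apply: connect_sub => x y /existsP[e /andP[eF H]].
apply: connect1; apply/existsP; exists e; by rewrite (subsetP sF _ eF).
Qed.

Lemma lam (F F' : {set E}) A B : F \subset F' -> A \in comps ends F ->
  B \in comps ends F' -> A \subset B \/ [disjoint A & B].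
Proof.
move=> sF /imsetP[a _ ->] /imsetP[b _ ->].
case: (boolP [disjoint Defs.comp ends F a & Defs.comp ends F' b]) => [|nd]; first by right.
left; move: nd; rewrite -setI_eq0 => /set0Pn[x]; rewrite !inE => /andP[ax bx].
apply/subsetP => y; rewrite !inE => ay.
apply: (connect_trans bx). apply: (connect_mono sF).
rewrite (sym_connect_sym (adjF_sym F)) in ax.
exact: connect_trans ax ay.
Qed.
End Lam.

Section Run.
Variables (R : realType) (V E : finType) (ends : E -> V * V) (c : E -> R)
          (D : {set V * V}) (eps : R)
          (k : nat) (tm : nat -> R) (Fs : nat -> {set E}) (As : nat -> {set {set V}}).
Hypothesis run : is_run ends c D eps k tm Fs As.

Lemma tm_mono j l : (j <= l)%N -> (l <= k)%N -> tm j <= tm l.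
Proof.
case: run => _ _ _ Hph _.
elim: l => [|l IH]; first by rewrite leqn0 => /eqP ->.
rewrite leq_eqVlt => /orP[/eqP -> //| jl] lk.
have [h _ _] := Hph l lk.
apply: le_trans (IH jl (ltnW lk)) (ltW h).
Qed.

Lemma yat_mono i i' S : (i <= i')%N -> (i' <= k)%N -> yat tm As i S <= yat tm As i' S.
Proof.
case: run => _ _ _ Hph _.
elim: i' => [|l IH]; first by rewrite leqn0 => /eqP ->.
rewrite leq_eqVlt => /orP[/eqP -> //| jl] lk.
have [h _ _] := Hph l lk.
apply: le_trans (IH jl (ltnW lk)) _.
rewrite /yat big_ord_recr /= lerDl mulr_ge0 // subr_ge0 ltW //.
Qed.

Lemma Fs_mono i i' : (i <= i')%N -> (i' <= k)%N -> Fs i \subset Fs i'.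
Proof.
move=> ii ik; case: run => _ HF _ _ _.
rewrite !HF //; last exact: leq_trans ik.
apply/subsetP => e; rewrite !inE => H; apply: le_trans H _.
apply: ler_sum => S _; apply: ler_wpM2r; first by rewrite ler0n.
exact: yat_mono.
Qed.

Lemma As_comps i : (i <= k)%N -> As i \subset comps ends (Fs i).
Proof.
move=> ik; case: run => _ _ HA _ _.
rewrite HA //; apply/subsetP => C; rewrite /dact !inE.
by case/orP => /andP[->].
Qed.

Lemma cmp t t' A B : t <= t' -> A \in active_at k tm As t -> B \in active_at k tm As t' ->
  A \subset B \/ [disjoint A & B].
Proof.
move=> tt; rewrite !inE => /existsP[i /andP[/andP[h1 h2] h3]] /existsP[i' /andP[/andP[h1' h2'] h3']].
have ii : (i <= i')%N.
  rewrite leqNgt; apply/negP => lt.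
  have := tm_mono lt (ltnW (ltn_ord i)); lra.
apply: lam (Fs_mono ii (ltnW (ltn_ord i'))) _ _.
  exact: (subsetP (As_comps (ltnW (ltn_ord i)))).
exact: (subsetP (As_comps (ltnW (ltn_ord i')))).
Qed.

Definition conn (P : {set {set V}}) := forall X : {set V},
  (forall A, A \in P -> A \subset X \/ [disjoint A & X]) ->
  (exists2 A, A \in P & A \subset X) -> (exists2 A, A \in P & [disjoint A & X]) ->
  sep D X != set0.

Lemma dir (P Q : {set {set V}}) tP tQ :
  (forall A, A \in P -> A \in active_at k tm As tP) ->
  (forall B, B \in Q -> B \in active_at k tm As tQ) -> tP <= tQ ->
  sep D (cover Q) = set0 -> conn P -> tuple_sub P Q \/ tuple_disj P Q.
Proof.
move=> HP HQ tt sQ cP.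
have H A B : A \in P -> B \in Q -> A \subset B \/ [disjoint A & B].
  by move=> AP BQ; apply: cmp tt (HP _ AP) (HQ _ BQ).
have Hd A : A \in P -> ~~ [exists B in Q, A \subset B] -> [disjoint A & cover Q].
  move=> AP /exists_inPn nB; rewrite -setI_eq0; apply/eqP/setP => x; rewrite !inE.
  apply/negbTE/andP => [[xA /bigcupP[B BQ xB]]].
  case: (H A B AP BQ) => [sAB|dAB]; first by move: (nB B BQ); rewrite sAB.
  by rewrite (disjointFr dAB xA) in xB.
case Hs: [forall A in P, [exists B in Q, A \subset B]].
  left => A AP; have /exists_inP[B BQ sAB] := forall_inP Hs A AP; by exists B.
case Hdd: [forall A in P, [forall B in Q, [disjoint A & B]]].
  right => A B AP BQ; exact: (forall_inP (forall_inP Hdd A AP) B BQ).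
exfalso.
move/negbT: Hs => /forall_inPn[A0 A0P nA0].
move/negbT: Hdd => /forall_inPn[A1 A1P /forall_inPn[B1 B1Q nd]].
have sA1 : A1 \subset cover Q.
  case: (H A1 B1 A1P B1Q) => [s|d]; last by rewrite d in nd.
  apply: subset_trans s _; exact: bigcup_sup.
suff: sep D (cover Q) != set0 by rewrite sQ eqxx.
apply: cP.
- move=> A AP; case: (boolP [exists B in Q, A \subset B]) => [/exists_inP[B BQ s]|n].
    by left; apply: subset_trans s _; exact: bigcup_sup.
  by right; apply: Hd.
- by exists A1.
- by exists A0 => //; apply: Hd.
Qed.

Lemma empty_sep (A X : {set V}) : A \subset X -> [disjoint A & X] -> sep D A = set0.
Proof.
move=> s dj; apply/setP => d; rewrite /sep !inE /separates.
have h1 := subsetP s d.1; have h2 := subsetP s d.2.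
have g1 := @disjointFr _ _ _ d.1 dj; have g2 := @disjointFr _ _ _ d.2 dj.
move: h1 h2 g1 g2; bsolve.
Qed.


Lemma empty_sep' (A X : {set V}) : A \subset X -> [disjoint A & X] -> sep D A != set0 -> False.
Proof. by move=> s dj; rewrite (empty_sep s dj) eqxx. Qed.

Lemma tri_core (U A B C X : {set V}) : sep D U = set0 -> U = A :|: B :|: C ->
  sep D A != set0 -> sep D B != set0 -> A \subset X -> [disjoint B & X] ->
  (C \subset X \/ [disjoint C & X]) -> sep D X != set0.
Proof.
move=> sU eU nA nB sA dB [sC|dC]; subst U.
- case/set0Pn: nB => d; rewrite /sep inE => /andP[dD sepB].
  apply/set0Pn; exists d; rewrite inE dD /=.
  have: d \notin sep D (A :|: B :|: C) by rewrite sU inE.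
  rewrite /sep inE dD /= => nU.
  move: sepB nU (subsetP sA d.1) (subsetP sA d.2) (subsetP sC d.1) (subsetP sC d.2)
    (@disjointFr _ _ _ d.1 dB) (@disjointFr _ _ _ d.2 dB).
  rewrite /separates !inE; bsolve.
- case/set0Pn: nA => d; rewrite /sep inE => /andP[dD sepA].
  apply/set0Pn; exists d; rewrite inE dD /=.
  have: d \notin sep D (A :|: B :|: C) by rewrite sU inE.
  rewrite /sep inE dD /= => nU.
  move: sepA nU (subsetP sA d.1) (subsetP sA d.2) (@disjointFr _ _ _ d.1 dC) (@disjointFr _ _ _ d.2 dC)
    (@disjointFr _ _ _ d.1 dB) (@disjointFr _ _ _ d.2 dB).
  rewrite /separates !inE; bsolve.
Qed.

Lemma cover2 (A B : {set V}) : cover [set A; B] = A :|: B.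
Proof.
apply/setP=> x; rewrite !inE; apply/bigcupP/idP => [[Z]|].
  by rewrite !inE => /orP[]/eqP-> ->; rewrite ?orbT.
by case/orP => h; [exists A|exists B]; rewrite ?inE ?eqxx ?orbT.
Qed.

Lemma in3P (Z A B C : {set V}) : Z \in [set A; B; C] -> [\/ Z = A, Z = B | Z = C].
Proof. by rewrite !inE => /orP[/orP[]|]/eqP->; [apply: Or31|apply: Or32|apply: Or33]. Qed.

Lemma cover3 (A B C : {set V}) : cover [set A; B; C] = A :|: B :|: C.
Proof.
apply/setP=> x; rewrite !inE; apply/bigcupP/idP => [[Z]|].
  by move=> /in3P[]-> ->; rewrite ?orbT.
by case/orP => [/orP[]|] h; [exists A|exists B|exists C]; rewrite ?inE ?eqxx ?orbT.
Qed.

Definition good (P : {set {set V}}) :=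
  [/\ exists t, forall A, A \in P -> A \in active_at k tm As t,
      sep D (cover P) = set0 & conn P].

Lemma pair_good P : autarkic_pair D k tm As P -> good P.
Proof.
case=> A [B [-> _ dAB [t /andP[tA tB]] [eqs nA]]].
split.
- by exists t => Z /set2P[]->.
- rewrite cover2; apply/setP => d; rewrite /sep !inE; case dD: (d \in D) => //=.
  have : (d \in sep D A) = (d \in sep D B) by rewrite eqs.
  rewrite /sep !inE dD /= => e.
  move: e (@disjointFr _ _ _ d.1 dAB) (@disjointFr _ _ _ d.2 dAB).
  rewrite /separates !inE; bsolve.
- move=> X _ [Z1 h1 s1] [Z2 h2 d2].
  case/set0Pn: (nA) => d; rewrite /sep inE => /andP[dD sA].
  have : (d \in sep D A) = (d \in sep D B) by rewrite eqs.
  rewrite /sep !inE dD sA /= => /esym sB.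
  apply/set0Pn; exists d; rewrite inE dD /=.
  case/set2P: h1 => ?; subst Z1; case/set2P: h2 => ?; subst Z2;
  move: sA sB (subsetP s1 d.1) (subsetP s1 d.2) (@disjointFr _ _ _ d.1 d2) (@disjointFr _ _ _ d.2 d2);
  rewrite /separates; bsolve.
Qed.

Lemma triple_good P : autarkic_triple D k tm As P -> good P.
Proof.
case=> A1 [A2 [A3 [-> _ [t /and3P[t1 t2 t3]] /and3P[n1 n2 n3] hU]]].
split.
- by exists t => Z /in3P[]->.
- by rewrite cover3.
- move=> X Hall [Z1 h1 s1] [Z2 h2 d2].
  have m1 : A1 \in [set A1; A2; A3] by rewrite !inE eqxx ?orbT.
  have m2 : A2 \in [set A1; A2; A3] by rewrite !inE eqxx ?orbT.
  have m3 : A3 \in [set A1; A2; A3] by rewrite !inE eqxx ?orbT.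
  move: h1 h2 => /in3P[] ? /in3P[] ?; subst Z1 Z2;
  first [ by case: (empty_sep' s1 d2 n1) | by case: (empty_sep' s1 d2 n2)
        | by case: (empty_sep' s1 d2 n3)
        | solve [apply: (tri_core hU _ _ _ s1 d2 (Hall _ m1)); try done;
                 by apply/setP => x; rewrite !inE; bcase]
        | solve [apply: (tri_core hU _ _ _ s1 d2 (Hall _ m2)); try done;
                 by apply/setP => x; rewrite !inE; bcase]
        | solve [apply: (tri_core hU _ _ _ s1 d2 (Hall _ m3)); try done;
                 by apply/setP => x; rewrite !inE; bcase] ].
Qed.

End Run.

Theorem lemma4p10 (R : realType) (V E : finType) (ends : E -> V * V) (c : E -> R)
    (D : {set V * V}) (eps : R)
    (c_ge0 : forall e, 0 <= c e) (eps_ge0 : 0 <= eps)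
    (k : nat) (tm : nat -> R) (Fs : nat -> {set E}) (As : nat -> {set {set V}})
    (run : is_run ends c D eps k tm Fs As)
    (P Q : {set {set V}}) :
  autarkic D k tm As P -> autarkic D k tm As Q ->
  tuple_sub P Q \/ tuple_sub Q P \/ tuple_disj P Q.
Proof.
have gd Z : autarkic D k tm As Z -> good D k tm As Z.
  by case; [exact: pair_good | exact: triple_good].
move=> /gd [[tP HP] sP cP] /gd [[tQ HQ] sQ cQ].
case: (lerP tP tQ) => [le|/ltW le].
- case: (dir run HP HQ le sQ cP); [by left | by right; right].
- case: (dir run HQ HP le sP cQ); [by right; left | move=> h; right; right].
  by move=> A B AP BQ; rewrite disjoint_sym; apply: h.
Qed.
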